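(* Let $\mathbb{K}$ be an algebraically closed field of characteristic zero, $\mathcal{C}\subset\mathbb{K}^2$ an affine irreducible plane curve defined by an irreducible polynomial $f(y_1,y_2)$, $A=(a,b)\in\mathbb{K}^2$ and $d\in\mathbb{K}\setminus\{0\}$. Let $\mathfrak{B}(\mathcal{C},A,d)\subset\mathbb{K}^2\times\mathbb{K}^2\times\mathbb{K}$ be the set of $(\bar x,\bar y,w)$, $\bar x=(x_1,x_2)$, $\bar y=(y_1,y_2)$, satisfying $f(y_1,y_2)=0$, $(x_1-y_1)^2+(x_2-y_2)^2=d^2$, $(y_2-b)(x_1-y_1)-(y_1-a)(x_2-y_2)=0$, $w\big((y_1-a)^2+(y_2-b)^2\big)=1$, and let $\pi_1(\bar x,\bar y,w)=\bar x$, $\pi_2(\bar x,\bar y,w)=\bar y$ be the projections restricted to $\mathfrak{B}(\mathcal{C},A,d)$. Let $\mathcal{C}_0=\{(p_1,p_2)\in\mathcal{C}:(p_1-a)^2+(p_2-b)^2\neq0\}$. Then: (1) If $\mathcal{C}$ is not the circle $(y_1-a)^2+(y_2-b)^2=d^2$, then (1.1) for every $\bar x\in\pi_1(\mathfrak{B}(\mathcal{C},A,d))\setminus\{A\}$ one has $\mathrm{Card}(\pi_1^{-1}(\bar x))\le 2$, and (1.2) if $A\in\pi_1(\mathfrak{B}(\mathcal{C},A,d))$ then $\mathrm{Card}(\pi_1^{-1}(A))\le 2\deg(\mathcal{C})$. (2) For every $\bar y\in\mathcal{C}_0$, $\mathrm{Card}(\pi_2^{-1}(\bar y))=2$.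
   Context: $\deg(\mathcal{C})$ is the degree of $f$. *)

(* Defs.v *)
From HB Require Import structures.
From mathcomp Require Import all_boot all_order all_algebra.
From mathcomp Require Import mpoly.
Set Implicit Arguments. Unset Strict Implicit. Unset Printing Implicit Defensive.
Import Order.TTheory GRing.Theory Num.Theory.
Local Open Scope ring_scope.

(* point of K^2 as a valuation of the two variables y1 = 'X_0, y2 = 'X_1 *)
Definition pt2 (K : ringType) (p : K * K) : 'I_2 -> K :=
  fun i => if val i == 0%N then p.1 else p.2.

Definition ev2 (K : comRingType) (f : {mpoly K[2]}) (p : K * K) : K :=
  f.@[pt2 p].

(* irreducible polynomial of K[y1,y2]: non-constant, and every factorisation
   has a constant (nonzero, msize = 1) factor *)
Definition irreducible_mpoly (K : idomainType) (f : {mpoly K[2]}) : Prop :=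
  (1 < msize f)%N /\
  forall g h : {mpoly K[2]}, f = g * h -> msize g = 1%N \/ msize h = 1%N.

(* total degree of f (= deg of the curve) *)
Definition tdeg (K : ringType) (f : {mpoly K[2]}) : nat := (msize f).-1.

Definition curve (K : comRingType) (f : {mpoly K[2]}) (p : K * K) : Prop :=
  ev2 f p = 0.

Definition Bset (K : comRingType) (f : {mpoly K[2]}) (A : K * K) (d : K)
  (z : (K * K) * (K * K) * K) : Prop :=
  let: (x, y, w) := z in
  [/\ ev2 f y = 0,
      (x.1 - y.1) ^+ 2 + (x.2 - y.2) ^+ 2 = d ^+ 2,
      (y.2 - A.2) * (x.1 - y.1) - (y.1 - A.1) * (x.2 - y.2) = 0
    & w * ((y.1 - A.1) ^+ 2 + (y.2 - A.2) ^+ 2) = 1].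

Definition pi1 (K : Type) (z : (K * K) * (K * K) * K) : K * K := z.1.1.
Definition pi2 (K : Type) (z : (K * K) * (K * K) * K) : K * K := z.1.2.

(* Card(P) <= n for a (possibly infinite) set P *)
Definition card_le (T : eqType) (P : T -> Prop) (n : nat) : Prop :=
  forall s : seq T, uniq s -> (forall z, z \in s -> P z) -> (size s <= n)%N.

Definition card_eq (T : eqType) (P : T -> Prop) (n : nat) : Prop :=
  exists s : seq T, [/\ uniq s, size s = n & forall z, P z <-> z \in s].

(* Main.v *)
Require Import Defs.
From HB Require Import structures.
From mathcomp Require Import all_boot all_order all_algebra.
From mathcomp Require Import mpoly.
From mathcomp Require Import ring zify.
Import Order.TTheory GRing.Theory Num.Theory.
Local Open Scope ring_scope.


Section Alg.
Variable K : closedFieldType.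
Hypothesis charK0 : [pchar K] =i pred0.

Lemma two_nz : (2 : K) != 0.
Proof. by have /pcharf0P -> := charK0. Qed.

Lemma sqrt_ex (c : K) : exists s, s ^+ 2 = c.
Proof.
have : size ('X^2 - c%:P : {poly K}) != 1%N.
  by rewrite size_XnsubC.
move/closed_rootP=> [s]; rewrite rootE !hornerE => /eqP H.
by exists s; apply/eqP; rewrite -subr_eq0 H.
Qed.

Lemma par_sol (v1 v2 u1 u2 s d : K) : s ^+ 2 = v1 ^+ 2 + v2 ^+ 2 -> s != 0 ->
  u1 ^+ 2 + u2 ^+ 2 = d ^+ 2 -> v2 * u1 - v1 * u2 = 0 ->
  (u1 = d / s * v1 /\ u2 = d / s * v2) \/
  (u1 = - (d / s * v1) /\ u2 = - (d / s * v2)).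
Proof.
move=> hs s0 hu hp.
set k := v1 * u1 + v2 * u2.
have hk : k ^+ 2 = (s * d) ^+ 2.
  transitivity ((v1^+2+v2^+2)*(u1^+2+u2^+2) - (v2 * u1 - v1 * u2)^+2).
    by rewrite /k; ring.
  by rewrite hp hu -hs; ring.
have s20 : s ^+ 2 != 0 by rewrite expf_neq0.
have e1 : s ^+ 2 * u1 = v1 * k.
  rewrite hs; transitivity (v1 * k + v2 * (v2 * u1 - v1 * u2)); first by rewrite /k; ring.
  by rewrite hp; ring.
have e2 : s ^+ 2 * u2 = v2 * k.
  rewrite hs; transitivity (v2 * k - v1 * (v2 * u1 - v1 * u2)); first by rewrite /k; ring.
  by rewrite hp; ring.
move/eqP: hk; rewrite eqf_sqr => /orP [] /eqP hk.
- left; split; apply: (mulfI s20); rewrite ?e1 ?e2 hk; field; exact: s0.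
- right; split; apply: (mulfI s20); rewrite ?e1 ?e2 hk; field; exact: s0.
Qed.


Lemma line_sol (x1 x2 y1 y2 a1 a2 d se w : K) : d != 0 ->
  se ^+ 2 = (x1 - a1) ^+ 2 + (x2 - a2) ^+ 2 -> (x1, x2) != (a1, a2) ->
  w * ((y1 - a1) ^+ 2 + (y2 - a2) ^+ 2) = 1 ->
  (x1 - y1) ^+ 2 + (x2 - y2) ^+ 2 = d ^+ 2 ->
  (y2 - a2) * (x1 - y1) - (y1 - a1) * (x2 - y2) = 0 ->
  exists2 mu, (mu == 1 - d / se) || (mu == 1 + d / se) &
    (y1 = a1 + mu * (x1 - a1) /\ y2 = a2 + mu * (x2 - a2)).
Proof.
move=> d0 hs xa hw hu hp.
have N0 : (y1 - a1) ^+ 2 + (y2 - a2) ^+ 2 != 0.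
  by apply/eqP=> N0; move: hw; rewrite N0 mulr0 => /eqP; rewrite eq_sym oner_eq0.
have hpar : (y2 - a2) * (x1 - a1) - (y1 - a1) * (x2 - a2) = 0.
  by rewrite -hp; ring.
set e1 := x1 - a1 in hs hpar *; set e2 := x2 - a2 in hs hpar *.
set v1 := y1 - a1 in N0 hpar *; set v2 := y2 - a2 in N0 hpar *.
set N := v1 ^+ 2 + v2 ^+ 2 in N0 *.
set k := v1 * e1 + v2 * e2.
have E1 : N * e1 = k * v1.
  transitivity (k * v1 + v2 * (v2 * e1 - v1 * e2)); first by rewrite /k /N; ring.
  by rewrite hpar; ring.
have E2 : N * e2 = k * v2.
  transitivity (k * v2 - v1 * (v2 * e1 - v1 * e2)); first by rewrite /k /N; ring.
  by rewrite hpar; ring.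
have k0 : k != 0.
  apply/eqP=> k0; move: xa; rewrite k0 !mul0r in E1 E2.
  move/eqP: E1; rewrite mulf_eq0 (negbTE N0) /= /e1 subr_eq0 => /eqP ->.
  move/eqP: E2; rewrite mulf_eq0 (negbTE N0) /= /e2 subr_eq0 => /eqP ->.
  by rewrite eqxx.
set mu := N / k.
have hv1 : v1 = mu * e1 by rewrite /mu mulrAC E1; field.
have hv2 : v2 = mu * e2 by rewrite /mu mulrAC E2; field.
have hu2 : (1 - mu) ^+ 2 * se ^+ 2 = d ^+ 2.
  rewrite -hu hs.
  have -> : x1 - y1 = e1 - v1 by rewrite /e1 /v1; ring.
  have -> : x2 - y2 = e2 - v2 by rewrite /e2 /v2; ring.
  by rewrite hv1 hv2; ring.
have se0 : se != 0.
  apply/eqP=> se0; move: hu2; rewrite se0 expr0n mulr0 => /esym/eqP; rewrite expf_eq0 (negbTE d0) andbF.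
  done.
have : (1 - mu) ^+ 2 = (d / se) ^+ 2.
  by rewrite expr_div_n -hu2; field.
move/eqP; rewrite eqf_sqr => hmu.
exists mu.
  move: hmu => /orP [] /eqP hmu; apply/orP; [left|right]; apply/eqP.
  - have -> : mu = 1 - (1 - mu) by ring.
    by rewrite hmu.
  - have -> : mu = 1 - (1 - mu) by ring.
    by rewrite hmu; ring.
split.
- by rewrite -hv1 /v1; ring.
- by rewrite -hv2 /v2; ring.
Qed.

End Alg.
Arguments sqrt_ex {K}. Arguments par_sol {K}. Arguments line_sol {K}. Arguments two_nz {K}.

Lemma card_le_list (T : eqType) (P : T -> Prop) (l : seq T) :
  (forall z, P z -> z \in l) -> card_le P (size l).
Proof. by move=> Hl s us Ps; apply: uniq_leq_size => // z /Ps /Hl. Qed.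

Lemma part2 (K : closedFieldType) (charK0 : [pchar K] =i pred0)
  (f : {mpoly K[2]}) (A : K * K) (d : K) (dnz : d != 0) (y : K * K) :
  curve f y -> (y.1 - A.1) ^+ 2 + (y.2 - A.2) ^+ 2 != 0 ->
  card_eq (fun z => Bset f A d z /\ pi2 z = y) 2.
Proof.
move=> hy N0.
have [s hs] := sqrt_ex ((y.1 - A.1) ^+ 2 + (y.2 - A.2) ^+ 2).
have s0 : s != 0 by apply: contra N0 => /eqP s0; rewrite -hs s0 expr0n.
set t := d / s.
have t0 : t != 0 by rewrite /t mulf_neq0 // invr_eq0.
set N := (y.1 - A.1) ^+ 2 + (y.2 - A.2) ^+ 2 in N0 hs *.
exists [:: ((y.1 + t * (y.1 - A.1), y.2 + t * (y.2 - A.2)), y, N^-1);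
          ((y.1 - t * (y.1 - A.1), y.2 - t * (y.2 - A.2)), y, N^-1)].
split => //.
  rewrite /= andbT inE; apply/negP => /eqP [] e1 e2.
  have h1 : (2 * t) * (y.1 - A.1) = 0.
    by apply/eqP; rewrite -subr_eq0 -(subrr (y.1 + t * (y.1 - A.1))) {2}e1; apply/eqP; ring.
  have h2 : (2 * t) * (y.2 - A.2) = 0.
    by apply/eqP; rewrite -subr_eq0 -(subrr (y.2 + t * (y.2 - A.2))) {2}e2; apply/eqP; ring.
  have tt0 : 2 * t != 0 by rewrite mulf_neq0 // two_nz.
  move/eqP: h1; rewrite mulf_eq0 (negbTE tt0) /= => /eqP h1.
  move/eqP: h2; rewrite mulf_eq0 (negbTE tt0) /= => /eqP h2.
  by move: N0; rewrite /N h1 h2 expr0n addr0 eqxx.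
move=> [[x y'] w]; split.
- rewrite /Bset /pi2 /= => [[[hf hu hp hw] ey]]; subst y'.
  have hw' : w = N^-1 by apply: (mulIf N0); rewrite hw mulVf.
  subst w.
  have := par_sol _ _ _ _ _ _ hs s0 hu hp => -[[e1 e2]|[e1 e2]]; rewrite !inE; apply/orP; [left|right].
  + apply/eqP; congr (_, _, _); case: x e1 e2 {hu hp} => x1 x2 /= e1 e2; congr (_, _).
    * by rewrite -/t -e1; ring.
    * by rewrite -/t -e2; ring.
  + apply/eqP; congr (_, _, _); case: x e1 e2 {hu hp} => x1 x2 /= e1 e2; congr (_, _).
    * by rewrite -/t in e1; rewrite -[t * _]opprK -e1; ring.
    * by rewrite -/t in e2; rewrite -[t * _]opprK -e2; ring.
- rewrite !inE => /orP [] /eqP [-> -> ->]; rewrite /Bset /pi2 /=; split => //;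
    (split; [exact: hy | | | by rewrite mulVf]).
  + transitivity (t ^+ 2 * N); first by rewrite /N; ring.
    by rewrite -hs /t; field.
  + ring.
  + transitivity (t ^+ 2 * N); first by rewrite /N; ring.
    by rewrite -hs /t; field.
  + ring.
Qed.

Lemma part11 (K : closedFieldType)
  (f : {mpoly K[2]}) (A : K * K) (d : K) (dnz : d != 0) (x : K * K) :
  x != A -> card_le (fun z => Bset f A d z /\ pi1 z = x) 2.
Proof.
case: x => x1 x2; case: A => a1 a2 xA.
have [se hse] := sqrt_ex ((x1 - a1) ^+ 2 + (x2 - a2) ^+ 2).
pose Y mu := (a1 + mu * (x1 - a1), a2 + mu * (x2 - a2)).
pose W (p : K * K) := ((p.1 - a1) ^+ 2 + (p.2 - a2) ^+ 2)^-1.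
pose m1 := 1 - d / se. pose m2 := 1 + d / se.
apply: (@card_le_list _ _ [:: ((x1, x2), Y m1, W (Y m1)); ((x1, x2), Y m2, W (Y m2))]).
move=> [[x' [y1 y2]] w]; rewrite /Bset /pi1 /= => [[[hf hu hp hw] ex]]; subst x'.
move: hu hp hw => /= hu hp hw.
have [mu hmu [e1 e2]] := line_sol _ _ _ _ _ _ _ _ _ dnz hse xA hw hu hp.
have N0 : (y1 - a1) ^+ 2 + (y2 - a2) ^+ 2 != 0.
  by apply/eqP=> N0; move: hw; rewrite N0 mulr0 => /eqP; rewrite eq_sym oner_eq0.
have hw' : w = W (y1, y2) by rewrite /W /=; apply: (mulIf N0); rewrite hw mulVf.
rewrite !inE; case/orP: hmu => /eqP hmu; apply/orP; [left|right];
  by rewrite hw' /Y /= e1 e2 hmu.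
Qed.


Section Emb.
Variable K : closedFieldType.

Definition emb (q : {poly K}) : {mpoly K[2]} := (map_poly (@mpolyC 2 K) q).['X_0].

Lemma embD p q : emb (p + q) = emb p + emb q.
Proof. by rewrite /emb rmorphD hornerD. Qed.
Lemma embM p q : emb (p * q) = emb p * emb q.
Proof. by rewrite /emb rmorphM hornerM. Qed.
Lemma embN p : emb (- p) = - emb p.
Proof. by rewrite /emb rmorphN hornerN. Qed.
Lemma embXp p k : emb (p ^+ k) = emb p ^+ k.
Proof. by rewrite /emb rmorphXn horner_exp. Qed.
Lemma embC c : emb c%:P = c%:MP.
Proof. by rewrite /emb map_polyC hornerC. Qed.
Lemma embX : emb 'X = 'X_0.
Proof. by rewrite /emb map_polyX hornerX. Qed.
Lemma embXn k : emb 'X^k = 'X_0 ^+ k.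
Proof. by rewrite /emb map_polyXn hornerXn. Qed.
Lemma ev_emb (v : 'I_2 -> K) q : (emb q).@[v] = q.[v ord0].
Proof.
rewrite /emb -(horner_map (meval v)).
set x := (X in _.[X]).
have -> : x = v ord0.
  exact: (mevalXU v 0).
rewrite -map_poly_comp.
by rewrite (eq_map_poly (fun c => mevalC v c)) map_poly_id.
Qed.

Definition Cp (a b d : K) : {mpoly K[2]} :=
  ('X_0 - a%:MP) ^+ 2 + ('X_1 - b%:MP) ^+ 2 - (d ^+ 2)%:MP.

Definition Rep a b d (p : {mpoly K[2]}) :=
  exists h r0 r1, p = Cp a b d * h + emb r0 + emb r1 * 'X_1.

Lemma decomp a b d p : Rep a b d p.
Proof.
have R0 : Rep a b d 0 by exists 0, 0, 0; rewrite !(embC, mulr0, mul0r, addr0).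
have RD p1 p2 : Rep a b d p1 -> Rep a b d p2 -> Rep a b d (p1 + p2).
  move=> [h1 [r1 [s1 ->]]] [h2 [r2 [s2 ->]]].
  exists (h1 + h2), (r1 + r2), (s1 + s2); rewrite !embD; ring.
have RM q p1 : Rep a b d p1 -> Rep a b d (emb q * p1).
  move=> [h1 [r1 [s1 ->]]].
  exists (emb q * h1), (q * r1), (q * s1); rewrite !embM; ring.
have RZ c p1 : Rep a b d p1 -> Rep a b d (c *: p1).
  by move=> H; rewrite -mul_mpolyC -embC; apply: RM.
have RY k : Rep a b d ('X_1 ^+ k).
  elim: k => [|k [h1 [r1 [s1 E]]]].
    exists 0, 1%:P, 0%:P; rewrite !embC rmorph1 rmorph0; ring.
  exists ('X_1 * h1 + emb s1), (s1 * ((d ^+ 2 - b ^+ 2)%:P - ('X - a%:P) ^+ 2)),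
    (r1 + s1 * (2 * b)%:P).
  rewrite exprS E /Cp !(embD, embN, embM, embXp, embC, embX).
  rewrite !rmorphB !rmorphXn !rmorphM rmorph_nat.
  ring.

rewrite (mpolyE p); apply: big_ind => // m _.
rewrite mpolyXE_id big_ord_recr big_ord_recr big_ord0 /= mul1r.
apply: RZ; rewrite -embXn; apply: RM; exact: RY.
Qed.

Lemma emb0 : emb 0 = 0.
Proof. by rewrite /emb rmorph0 horner0. Qed.

Hypothesis charK0 : [pchar K] =i pred0.

Lemma natr_inj : injective (fun k : nat => k%:R : K).
Proof.
have H m n : (m <= n)%N -> m%:R = n%:R :> K -> m = n.
  move=> le e; apply/eqP; rewrite eqn_leq le /=.
  have : ((n - m)%:R == 0 :> K) by rewrite natrB // e subrr.
  have /pcharf0P -> := charK0; rewrite subn_eq0 => ->; done.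
move=> m n /= e; case: (leqP m n) => [le|/ltnW le]; first exact: H.
by apply/esym/H.
Qed.

Lemma allroots_zero (q : {poly K}) : (forall t, q.[t] = 0) -> q = 0.
Proof.
move=> H; apply/eqP; apply: contraT => q0.
have := @max_poly_roots _ q [seq k%:R | k <- iota 0 (size q)] q0.
rewrite size_map size_iota ltnn; apply.
- by apply/allP => x /mapP [k _ ->]; rewrite /root H.
- by rewrite (map_inj_uniq natr_inj) iota_uniq.
Qed.

Lemma vanish (a d : K) (q : {poly K}) :
  (forall t, t != a + d -> t != a - d -> q.[t] = 0) -> q = 0.
Proof.
move=> H.
have : q * ('X - (a + d)%:P) * ('X - (a - d)%:P) = 0.
  apply: allroots_zero => t; rewrite !hornerE.
  case: (eqVneq t (a + d)) => [->|h1]; first by rewrite subrr mulr0 mul0r.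
  case: (eqVneq t (a - d)) => [->|h2]; first by rewrite subrr mulr0.
  by rewrite H // !mul0r.
move/eqP; rewrite !mulf_eq0 !polyXsubC_eq0 !orbF; exact/eqP.
Qed.

Lemma evC (a b d : K) (v : 'I_2 -> K) :
  (Cp a b d).@[v] = (v 0 - a) ^+ 2 + (v 1 - b) ^+ 2 - d ^+ 2.
Proof. by rewrite /Cp !(mevalB, mevalD, mevalM, rmorphXn, mevalC, mevalXU). Qed.

Lemma circle_div (a b d : K) (f : {mpoly K[2]}) : d != 0 ->
  (forall y1 y2, (y1 - a) ^+ 2 + (y2 - b) ^+ 2 = d ^+ 2 -> ev2 f (y1, y2) = 0) ->
  exists h, f = Cp a b d * h.
Proof.
move=> d0 H.
have [h [r0 [r1 E]]] := decomp a b d f.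
have key t : t != a + d -> t != a - d -> r0.[t] = 0 /\ r1.[t] = 0.
  move=> h1 h2.
  have td : (t - a) ^+ 2 != d ^+ 2.
    rewrite eqf_sqr negb_or; apply/andP; split.
      by apply: contra h1 => /eqP <-; apply/eqP; ring.
    by apply: contra h2 => /eqP e; apply/eqP; rewrite -e; ring.
  have [s hs] := sqrt_ex (d ^+ 2 - (t - a) ^+ 2).
  have s0 : s != 0.
    by apply: contra td => /eqP s0; move: hs; rewrite s0 expr0n => /eqP; rewrite eq_sym subr_eq0 => /eqP ->.
  have ev y2 : (y2 - b) ^+ 2 = s ^+ 2 -> r0.[t] + r1.[t] * y2 = 0.
    move=> hy2.
    have := H t y2; rewrite /ev2 E mevalD mevalD mevalM mevalM evC !ev_emb /pt2 /=.
    have -> : ('X_1 : {mpoly K[2]}).@[fun i : 'I_2 => if val i == 0%N then t else y2] = y2.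
      exact: (mevalXU _ 1).
    rewrite hy2 hs; have -> : (t - a) ^+ 2 + (d ^+ 2 - (t - a) ^+ 2) - d ^+ 2 = 0 by ring.
    rewrite mul0r add0r; apply; ring.
  have e1 := ev (b + s) (ltac:(congr (_ ^+ 2); ring)).
  have e2 := ev (b - s) (ltac:(rewrite -sqrrN; congr (_ ^+ 2); ring)).
  have r10 : r1.[t] = 0.
    have : r1.[t] * (2 * s) = 0 by rewrite -(subrr (r0.[t] + r1.[t] * (b + s))) {2}e1 -e2; ring.
    by move/eqP; rewrite !mulf_eq0 (negbTE s0) (negbTE (two_nz charK0)) !orbF => /eqP.
  by split => //; move: e1; rewrite r10 mul0r addr0.
rewrite E.
have -> : r0 = 0 by apply: (vanish a d) => t h1 h2; case: (key t h1 h2).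
have -> : r1 = 0 by apply: (vanish a d) => t h1 h2; case: (key t h1 h2).
by exists h; rewrite emb0 mul0r !addr0.
Qed.

End Emb.


Definition degle {K : closedFieldType} (k : nat) (p : {poly K}) := (size p <= k.+1)%N.

Section Count.
Variable K : closedFieldType.
Hypothesis charK0 : [pchar K] =i pred0.

Lemma degleW k l (p : {poly K}) : (k <= l)%N -> degle k p -> degle l p.
Proof. rewrite /degle; lia. Qed.
Lemma degleM k l (p q : {poly K}) : degle k p -> degle l q -> degle (k + l) (p * q).
Proof. rewrite /degle => hp hq; have := size_mul_leq p q; lia. Qed.
Lemma degleD k (p q : {poly K}) : degle k p -> degle k q -> degle k (p + q).
Proof. rewrite /degle => hp hq; have := size_polyD p q; lia. Qed.
Lemma degleC c : degle 0 (c%:P : {poly K}).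
Proof. exact: size_polyC_leq1. Qed.
Lemma degleXn k : degle k ('X^k : {poly K}).
Proof. by rewrite /degle size_polyXn. Qed.
Lemma degleN k (p : {poly K}) : degle k p -> degle k (- p).
Proof. by rewrite /degle size_polyN. Qed.
Lemma degleX k (p : {poly K}) l : degle k p -> degle (k * l) (p ^+ l).
Proof. rewrite /degle => hp; have := size_exp_leq p l; have := leq_pmul2r. nia. Qed.


Variables (f : {mpoly K[2]}) (a b d i : K).
Hypothesis dnz : d != 0.
Hypothesis hi : i ^+ 2 = -1.

Let n := tdeg f.
Definition P1 : {poly K} := ('X^2 + (d ^+ 2)%:P) * (2^-1)%:P + a%:P * 'X.
Definition P2 : {poly K} := ((d ^+ 2)%:P - 'X^2) * (i / 2)%:P + b%:P * 'X.
Definition Pj (j : 'I_2) := if val j == 0%N then P1 else P2.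
Definition G : {poly K} :=
  \sum_(m <- msupp f) (f@_m)%:P * ((\prod_(j < 2) Pj j ^+ m j) * 'X^(n - mdeg m)).

Lemma degle_Pj j : degle 2 (Pj j).
Proof.
have C2 c : degle 2 (c%:P : {poly K}) by apply: (@degleW 0) => //; exact: degleC.
have L : degle 2 (b%:P * 'X) /\ degle 2 (a%:P * 'X).
  by split; apply: (@degleW 1) => //; apply: (@degleM 0 1); [exact: degleC | exact: (degleXn 1) | exact: degleC | exact: (degleXn 1)].
rewrite /Pj; case: ifP => _.
- apply: degleD; last by case: L.
  apply: (@degleM 2 0); last exact: degleC.
  by apply: degleD; [exact: degleXn | exact: C2].
- apply: degleD; last by case: L.
  apply: (@degleM 2 0); last exact: degleC.
  by apply: degleD; [exact: C2 | apply: degleN; exact: degleXn].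
Qed.

Lemma size_G : (size G <= (2 * n).+1)%N.
Proof.
rewrite /G big_seq; apply: (@big_ind _ (degle (2 * n))) => //.
- by rewrite /degle size_poly0.
- by move=> p q; apply: degleD.
move=> m hm.
have hdeg : (mdeg m <= n)%N by have := msize_mdeg_lt hm; rewrite /n /tdeg; lia.
apply: (@degleW (0 + (2 * mdeg m + (n - mdeg m)))); first lia.
apply: degleM; first exact: degleC.
apply: degleM; last exact: degleXn.
rewrite mdegE big_distrr /=.
apply: (@big_ind2 _ _ (fun k p => degle k p)).
- by rewrite /degle size_poly1.
- by move=> k1 p1 k2 p2; apply: degleM.
- by move=> j _; exact: (@degleX 2 (Pj j) (m j) (degle_Pj j)).
Qed.


Lemma G_eval u : u != 0 -> G.[u] = u ^+ n * ev2 f (P1.[u] / u, P2.[u] / u).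
Proof.
move=> u0.
rewrite /ev2 mevalE mulr_sumr /G horner_sum; apply: eq_big_seq => m hm.
rewrite hornerM hornerC hornerM horner_prod hornerXn.
have hdeg : (mdeg m <= n)%N by have := msize_mdeg_lt hm; rewrite /n /tdeg; lia.
rewrite -{2}(subnK hdeg) exprD mdegE -prodrXr.
have -> : \prod_(j < 2) (Pj j ^+ m j).[u] =
   \prod_(j < 2) u ^+ m j * \prod_(j < 2) pt2 (P1.[u] / u, P2.[u] / u) j ^+ m j.
  rewrite -big_split; apply: eq_bigr => j _ /=; rewrite horner_exp -exprMn.
  by congr (_ ^+ _); rewrite /pt2 /Pj; case: ifP => _ /=; rewrite mulrC divfK.
set p1 := \prod_(j < 2) u ^+ m j.
set p2 := \prod_(j < 2) pt2 _ j ^+ m j.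
set q := u ^+ _.
clearbody p1 p2 q; ring.
Qed.

Lemma circ_par y1 y2 : (y1 - a) ^+ 2 + (y2 - b) ^+ 2 = d ^+ 2 ->
  let u := (y1 - a) + i * (y2 - b) in
  [/\ u != 0, P1.[u] / u = y1 & P2.[u] / u = y2].
Proof.
move=> hc u.
set v := (y1 - a) - i * (y2 - b).
have huv : u * v = d ^+ 2.
  rewrite -hc; transitivity ((y1 - a) ^+ 2 - i ^+ 2 * (y2 - b) ^+ 2); first by rewrite /u /v; ring.
  by rewrite hi; ring.
have u0 : u != 0.
  by apply: contra dnz => /eqP u0; move: huv; rewrite u0 mul0r => /esym/eqP; rewrite expf_eq0.
have two0 := two_nz charK0.
have E1 : P1.[u] = y1 * u.
  rewrite /P1 !hornerE -huv /v /u; field.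
  by rewrite -[2]/(2%:R); exact: two0.
have E2 : P2.[u] = y2 * u - (i ^+ 2 + 1) * (y2 - b) * u.
  rewrite /P2 hornerD !hornerM !hornerC hornerD hornerN hornerC hornerXn hornerX -huv /v /u; field.
  by rewrite -[2]/(2%:R); exact: two0.
split => //.
- by rewrite E1 mulfK.
- by rewrite E2 hi addNr mul0r mul0r subr0 mulfK.
Qed.

End Count.

Lemma part12 (K : closedFieldType) (charK0 : [pchar K] =i pred0)
  (f : {mpoly K[2]}) (firr : irreducible_mpoly f) (a b d : K) (dnz : d != 0) :
  (~ (forall y : K * K,
          curve f y <-> (y.1 - a) ^+ 2 + (y.2 - b) ^+ 2 = d ^+ 2)) ->
  card_le (fun z => Bset f (a, b) d z /\ pi1 z = (a, b)) (2 * tdeg f).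
Proof.
move=> ncirc.
have [i hi] := sqrt_ex (-1 : K).
have [G0|G0] := eqVneq (G K f a b d i) 0.
  exfalso.
  have van y1 y2 : (y1 - a) ^+ 2 + (y2 - b) ^+ 2 = d ^+ 2 -> ev2 f (y1, y2) = 0.
    move=> hc; have [u0 e1 e2] := circ_par K charK0 a b d i dnz hi _ _ hc.
    have := G_eval K f a b d i dnz _ u0.
    rewrite G0 horner0 e1 e2 => /esym/eqP; rewrite mulf_eq0 expf_eq0 (negbTE u0) andbF /=.
    by move/eqP.
  have [h E] := circle_div K charK0 a b d f dnz van.
  case: firr => _ /(_ _ _ E) [] hs.
  - have hC := msize1_polyC (eq_leq hs).
    have e1 := evC K a b d (pt2 (a, b)); rewrite hC mevalC /pt2 /= in e1.
    have e2 := evC K a b d (pt2 (a + d, b)); rewrite hC mevalC /pt2 /= in e2.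
    have hd : d ^+ 2 = ((a + d - a) ^+ 2 + (b - b) ^+ 2 - d ^+ 2) -
                       ((a - a) ^+ 2 + (b - b) ^+ 2 - d ^+ 2) by ring.
    rewrite -e1 -e2 subrr in hd.
    by move/eqP: hd; rewrite expf_eq0 (negbTE dnz) andbF.
  - move/eqP/msize_poly1P: hs => [c c0 hc]; apply: ncirc => y.
    rewrite /curve /ev2 E hc mevalM mevalC evC /pt2 /=.
    split => [/eqP | ->]; last by rewrite subrr mul0r.
    by rewrite mulf_eq0 (negbTE c0) orbF subr_eq0 => /eqP.
move=> s us Hs.
pose U (z : (K * K) * (K * K) * K) := (z.1.2.1 - a) + i * (z.1.2.2 - b).
have fib z : z \in s -> exists y1 y2,
   [/\ z = ((a, b), (y1, y2), ((y1 - a) ^+ 2 + (y2 - b) ^+ 2)^-1),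
       (y1 - a) ^+ 2 + (y2 - b) ^+ 2 = d ^+ 2 & ev2 f (y1, y2) = 0].
  move/Hs; case: z => [[x [y1 y2]] w]; rewrite /Bset /pi1 /= => [[[hf hu hp hw] ex]].
  subst x; move: hu hw => /= hu hw.
  have hc : (y1 - a) ^+ 2 + (y2 - b) ^+ 2 = d ^+ 2 by rewrite -hu; ring.
  have N0 : (y1 - a) ^+ 2 + (y2 - b) ^+ 2 != 0 by rewrite hc expf_neq0.
  exists y1, y2; split => //.
  by congr (_, _); apply: (mulIf N0); rewrite hw mulVf.
have hsz := size_G K f a b d i dnz.
have := @max_poly_roots _ _ (map U s) G0.
rewrite size_map; move=> H; have : (size s < size (G K f a b d i))%N.
  apply: H.
  - apply/allP => u /mapP [z zs ->]; have [y1 [y2 [-> hc hf]]] := fib z zs.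
    have [u0 e1 e2] := circ_par K charK0 a b d i dnz hi _ _ hc.
    by rewrite /root /U /= G_eval // e1 e2 hf mulr0.
  - rewrite (map_inj_in_uniq _) // => z1 z2 z1s z2s.
    have [y1 [y2 [-> hc hf]]] := fib z1 z1s.
    have [y1' [y2' [-> hc' hf']]] := fib z2 z2s.
    rewrite /U /= => eu.
    have [_ e1 e2] := circ_par K charK0 a b d i dnz hi _ _ hc.
    have [_ e1' e2'] := circ_par K charK0 a b d i dnz hi _ _ hc'.
    have ey1 : y1 = y1' by rewrite -e1 -e1' eu.
    have ey2 : y2 = y2' by rewrite -e2 -e2' eu.
    by rewrite ey1 ey2.
move: hsz; rewrite /tdeg; lia.
Qed.

Theorem lemma2 (K : closedFieldType) (charK0 : [pchar K] =i pred0)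
  (f : {mpoly K[2]}) (firr : irreducible_mpoly f)
  (A : K * K) (d : K) (dnz : d != 0) :
  ((~ (forall y : K * K,
          curve f y <-> (y.1 - A.1) ^+ 2 + (y.2 - A.2) ^+ 2 = d ^+ 2)) ->
     (forall x : K * K,
        (exists z, Bset f A d z /\ pi1 z = x) -> x != A ->
        card_le (fun z => Bset f A d z /\ pi1 z = x) 2)
  /\ ((exists z, Bset f A d z /\ pi1 z = A) ->
        card_le (fun z => Bset f A d z /\ pi1 z = A) (2 * tdeg f)))
  /\
  (forall y : K * K, curve f y ->
     (y.1 - A.1) ^+ 2 + (y.2 - A.2) ^+ 2 != 0 ->
     card_eq (fun z => Bset f A d z /\ pi2 z = y) 2).
Proof.
split.
- move=> nc; split.
  + by move=> x _ xA; apply: part11.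
  + by move=> _; case: A nc => a b nc; apply: part12.
- by move=> y hy hN; apply: part2.
Qed.
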